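(* Let $\Gamma\in\mathcal S$ have $n$ vertices and let $\varphi$ be an embedding as in the definition of $\mathcal S$. Then for every vertex $v$, either $\varphi(v)=E_{i_v}-\sum_{j\in J_v}E_j$ or $\varphi(v)=-2E_{i_v}-\sum_{j\in J_v}E_j$, for some index $i_v$ and some subset $J_v\subset\{1,\dots,n\}$ with $i_v\notin J_v$.
   Context: A plumbing tree is a finite tree $\Gamma$ each of whose vertices $v$ carries an integer decoration $d(v)$. $\Gamma$ is minimal if no vertex has decoration $-1$. For $n\ge 1$ let $(\mathbb Z^n,Q_n)$ be the lattice with basis $E_1,\dots,E_n$ and $Q_n(E_i,E_j)=-\delta_{ij}$, and let $K=\sum_{i=1}^n E_i$. A plumbing tree $\Gamma$ on $n$ vertices is a symplectic plumbing tree if there is a map $\varphi$ (an embedding) from its vertex set to $\mathbb Z^n$ such that: for distinct vertices $v_1,v_2$, $Q_n(\varphi(v_1),\varphi(v_2))$ is $1$ if they are adjacent and $0$ otherwise; $Q_n(\varphi(v),\varphi(v))=d(v)$ for every $v$; and $Q_n(\varphi(v),K)+Q_n(\varphi(v),\varphi(v))=-2$ for every $v$. $\mathcal S$ is the set of minimal, connected symplectic plumbing trees. *)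

(* Defs.v *)
From HB Require Import structures.
From mathcomp Require Import all_boot all_order all_algebra.
Set Implicit Arguments. Unset Strict Implicit. Unset Printing Implicit Defensive.
Import GRing.Theory Num.Theory.
Local Open Scope ring_scope.

(* The lattice Z^n, vectors indexed by 'I_n (E_1..E_n become E_0..E_{n-1}). *)
Definition lat (n : nat) := {ffun 'I_n -> int}.

Definition Qn (n : nat) (x y : lat n) : int := - \sum_(i < n) x i * y i.

Definition Ebasis (n : nat) (i : 'I_n) : lat n := [ffun k => (k == i)%:R].

Definition Kcan (n : nat) : lat n := \sum_(i < n) Ebasis i.

Definition is_tree (V : finType) (adj : rel V) : Prop :=
  irreflexive adj /\ symmetric adj /\ (forall x y : V, connect adj x y) /\
  (forall s : seq V, (2 < size s)%N -> uniq s -> ~~ cycle adj s).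

Definition minimal_plumbing (V : finType) (d : V -> int) : Prop :=
  forall v, d v <> -1.

Definition symp_embedding (V : finType) (adj : rel V) (d : V -> int) (n : nat)
  (phi : V -> lat n) : Prop :=
  (forall v w : V, v != w -> Qn (phi v) (phi w) = (if adj v w then 1 else 0)) /\
  (forall v : V, Qn (phi v) (phi v) = d v) /\
  (forall v : V, Qn (phi v) (Kcan n) + Qn (phi v) (phi v) = -2).

(* Main.v *)
Require Import Defs.
From HB Require Import structures.
From mathcomp Require Import all_boot all_order all_algebra.
From mathcomp Require Import zify.
Import GRing.Theory Num.Theory.
Local Open Scope ring_scope.

Lemma aux_a (t : int) : t * (t+1) <= 2 -> t * (t+1) != 0 -> (t = 1 \/ t = -2) /\ t*(t+1) = 2.
Proof. move=> h1 /eqP h2. have : (-2 <= t <= 1). nia.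
move=> hb; move: h2.
have [->|[->|[->|->]]] : t = -2 \/ t = -1 \/ t = 0 \/ t = 1 by lia.
all: try by []. all: move=> _; split; [by [left|right] | by []].
Qed.
Lemma aux_b (t : int) : 0 <= t * (t+1). Proof. nia. Qed.
Lemma aux_c (t : int) : t * (t+1) = 0 -> t = 0 \/ t = -1. Proof. move=> h. nia. Qed.

Lemma sumE_at (n : nat) (J : {set 'I_n}) (k : 'I_n) :
  (\sum_(j in J) Ebasis j) k = (k \in J)%:R.
Proof.
rewrite sum_ffunE.
have [kJ|kJ] := boolP (k \in J).
  rewrite (big_setD1 k) //= big1 ?addr0 /Ebasis ?ffunE ?eqxx //.
  move=> j; rewrite !inE => /andP[jk _]; by rewrite ffunE eq_sym (negbTE jk).
rewrite big1 // => j jJ; rewrite /Ebasis ffunE.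
by case: eqP => // Ekj; rewrite Ekj jJ in kJ.
Qed.

Lemma latB n (f g : lat n) k : (f - g) k = f k - g k.
Proof. rewrite /lat in f g *. by rewrite !ffunE. Qed.
Lemma latN n (f : lat n) k : (- f) k = - f k.
Proof. rewrite /lat in f *. by rewrite !ffunE. Qed.
Lemma latMn n (f : lat n) k m : (f *+ m) k = f k *+ m.
Proof. rewrite /lat in f *. elim: m => [|m IH]; rewrite ?mulr0n ?mulrS ?ffunE //. by rewrite IH. Qed.

Lemma Kcan_at (n : nat) (k : 'I_n) : Kcan n k = 1.
Proof.
rewrite /Kcan sum_ffunE (bigD1 k) //= big1 ?addr0 /Ebasis ?ffunE ?eqxx //.
move=> j jk; by rewrite ffunE eq_sym (negbTE jk).
Qed.

Theorem lemma3p1 (n : nat) (V : finType) (adj : rel V) (d : V -> int)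
  (phi : V -> lat n) :
  (0 < n)%N -> #|V| = n ->
  is_tree adj -> minimal_plumbing d -> symp_embedding adj d phi ->
  forall v : V, exists (i : 'I_n) (J : {set 'I_n}),
    i \notin J /\
    (phi v = Ebasis i - \sum_(j in J) Ebasis j \/
     phi v = - (Ebasis i *+ 2) - \sum_(j in J) Ebasis j).
Proof.
move=> _ _ _ _ [_ [_ HK]] v.
set x := phi v.
have Hs : \sum_(k < n) x k * (x k + 1) = 2.
  have := HK v; rewrite /Qn -/x.
  under eq_bigr do rewrite Kcan_at mulr1.
  move=> h.
  have -> : \sum_(k < n) x k * (x k + 1) = \sum_(k < n) x k + \sum_(k < n) x k * x k.
    by rewrite -big_split; apply: eq_bigr => k _; rewrite mulrDr mulr1 addrC.
  by rewrite -(opprK 2) -h opprD !opprK.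
case: (pickP (fun k => x k * (x k + 1) != 0)) => [i Hi|H0]; last first.
  move: Hs; rewrite big1 // => k _; by move/negbFE/eqP: (H0 k).
move: Hs; rewrite (bigD1 i) //= => Hs.
have Hr : 0 <= \sum_(k < n | k != i) x k * (x k + 1) by apply: sumr_ge0 => k _; apply: aux_b.
have [Hxi Hxi2] : (x i = 1 \/ x i = -2) /\ x i * (x i + 1) = 2.
  apply: aux_a => //; move: Hs Hr.
  set r := \sum_(k < n | k != i) _; set t := x i * _; lia.
have Hrest : \sum_(k < n | k != i) x k * (x k + 1) = 0.
  move: Hs Hxi2; set r := \sum_(k < n | k != i) _; set t := x i * _; lia.
have Hk : forall k, k != i -> x k = 0 \/ x k = -1.
  move=> k ki; apply: aux_c.
  by move/psumr_eq0P: Hrest => ->// j _; apply: aux_b.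
exists i, [set k | x k == -1].
split.
  rewrite inE; apply/negP=> /eqP; case: Hxi => ->; by [].
case: Hxi => Hxi; [left|right]; apply/ffunP => k;
  rewrite ?latB ?latN ?latMn sumE_at inE /Ebasis !ffunE;
  (have [->|ki] := eqVneq k i; [by rewrite Hxi|]);
  case: (Hk k ki) => ->; by [].
Qed.
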